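(* Let $X,Y$ be metric vector spaces over $K$ with metrics $d_X,d_Y$, where $d_Y$ is translation invariant, and let $F:X\to Y$ be a linear mapping. (a) If $F\in B_d(X,Y)$, then $F$ is continuous. Conversely, suppose $F$ is continuous, $d_X$ is translation invariant and scale bounded on $X$ with constants $C_\alpha=M(\alpha)|\alpha|$ where $M$ is a positive bounded function on $K$, and $Y$ is a normed space whose metric $d_Y$ is the one induced by its norm. Then $F\in B_d(X,Y)$. (b) If $d_X$ is translation invariant and $F$ is continuous at a single point, then $F$ is continuous.
   Context: $K$ is $\mathbb{R}$ or $\mathbb{C}$. For maps $F_1,F_2:X\to Y$, $d(F_1,F_2)=\max\left\{\sup_{x\neq0,x\in X}\frac{d_Y[F_1(x),F_2(x)]}{d_X(x,0)},\ d_Y[F_1(0),F_2(0)]\right\}$, and $B_d(X,Y)$ is the set of maps $F:X\to Y$ with $d(F,0)<\infty$. A translation invariant metric $d_X$ is scale bounded on $X$ if for every $\alpha\in K$ there is a positive number $C_\alpha$ with $d_X(\alpha s,0)\le C_\alpha d_X(s,0)$ for all $s\in X$. *)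

(* Defs.v *)
From HB Require Import structures.
From mathcomp Require Import all_boot all_order all_algebra.
From mathcomp Require Import all_classical all_reals all_analysis.
From mathcomp Require Import complex.
Set Implicit Arguments. Unset Strict Implicit. Unset Printing Implicit Defensive.
Import Order.TTheory GRing.Theory Num.Theory.
Local Open Scope ring_scope.
Local Open Scope classical_set_scope.

(* Scalars: a field K together with its (real-valued) absolute value absK.
   The theorem is instantiated below with K = R (absK = |.|) and
   K = C = Rcomplex R (absK = complex modulus). *)
Section Defs.
Variables (R : realType) (K : fieldType) (absK : K -> R).

Definition is_metric (X : Type) (d : X -> X -> R) : Prop :=
  [/\ forall x y, 0 <= d x y,
      forall x y, d x y = 0 <-> x = y,
      forall x y, d x y = d y x &
      forall x y z, d x z <= d x y + d y z].

Definition metric_vector_space (X : lmodType K) (d : X -> X -> R) : Prop :=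
  [/\ is_metric d,
      (forall (x y : X) (e : R), 0 < e -> exists2 r : R, 0 < r &
         forall x' y' : X, d x x' < r -> d y y' < r -> d (x + y) (x' + y') < e) &
      (forall (a : K) (x : X) (e : R), 0 < e -> exists2 r : R, 0 < r &
         forall (b : K) (x' : X), absK (a - b) < r -> d x x' < r ->
           d (a *: x) (b *: x') < e)].

Definition translation_invariant (X : lmodType K) (d : X -> X -> R) : Prop :=
  forall x y z : X, d (x + z) (y + z) = d x y.

Definition is_norm (Y : lmodType K) (n : Y -> R) : Prop :=
  [/\ forall y, 0 <= n y,
      forall y, n y = 0 <-> y = 0,
      forall (a : K) y, n (a *: y) = absK a * n y &
      forall y1 y2, n (y1 + y2) <= n y1 + n y2].

Definition continuous_at_m (X Y : Type) (dX : X -> X -> R) (dY : Y -> Y -> R)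
  (f : X -> Y) (x : X) : Prop :=
  forall e : R, 0 < e -> exists2 r : R, 0 < r &
    forall y : X, dX x y < r -> dY (f x) (f y) < e.

Definition continuous_m (X Y : Type) (dX : X -> X -> R) (dY : Y -> Y -> R)
  (f : X -> Y) : Prop := forall x, continuous_at_m dX dY f x.

Definition dmap (X Y : lmodType K) (dX : X -> X -> R) (dY : Y -> Y -> R)
  (F1 F2 : X -> Y) : \bar R :=
  Order.max (ereal_sup [set ((dY (F1 x) (F2 x)) / dX x 0)%:E | x in [set x : X | x != 0]])
            ((dY (F1 0) (F2 0))%:E).

Definition in_Bd (X Y : lmodType K) (dX : X -> X -> R) (dY : Y -> Y -> R)
  (F : X -> Y) : Prop := (dmap dX dY F (fun _ : X => (0 : Y)%R) < +oo)%E.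

Definition theorem9_for : Prop :=
  forall (X Y : lmodType K) (dX : X -> X -> R) (dY : Y -> Y -> R)
         (F : {linear X -> Y}),
  metric_vector_space dX -> metric_vector_space dY ->
  translation_invariant dY ->
  (in_Bd dX dY F -> continuous_m dX dY F) /\
  (continuous_m dX dY F -> translation_invariant dX ->
   forall M : K -> R, (forall a, 0 < M a) -> (exists B : R, forall a, M a <= B) ->
   (forall (a : K) (s : X), dX (a *: s) 0 <= M a * absK a * dX s 0) ->
   forall nY : Y -> R, is_norm nY -> (forall y1 y2, dY y1 y2 = nY (y1 - y2)) ->
   in_Bd dX dY F) /\
  (translation_invariant dX -> (exists x0, continuous_at_m dX dY F x0) ->
   continuous_m dX dY F).

End Defs.

(* Main.v *)
Require Import Defs.
From HB Require Import structures.
From mathcomp Require Import all_boot all_order all_algebra.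
From mathcomp Require Import all_classical all_reals all_analysis.
From mathcomp Require Import complex.
From mathcomp Require Import ring lra.
Import Order.TTheory GRing.Theory Num.Theory.
Local Open Scope ring_scope.
Local Open Scope classical_set_scope.

Section Gen.
Variables (R : realType) (K : fieldType) (absK : K -> R).
Hypothesis abs0 : absK 0 = 0.
Hypothesis absreal : forall t : R, 0 < t -> exists a : K, absK a = t.

Lemma gen9 : theorem9_for absK.
Proof.
move=> X Y dX dY F [[dX0 dXE dXC dXT] addc scalc] [[dY0 dYE dYC dYT] _ _] tiY.
have dXxx : forall x, dX x x = 0 by move=> x; apply/dXE.
have dYxx : forall y, dY y y = 0 by move=> y; apply/dYE.
have dXpos : forall x : X, x != 0 -> 0 < dX x 0.
  move=> x x0; rewrite lt_def dX0 andbT; apply/eqP => /dXE h; by rewrite h eqxx in x0.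
split; [|split].
-
  move=> Bd.
  have [C C0 HC] : exists2 C : R, 0 < C &
      forall x : X, x != 0 -> dY (F x) 0 <= C * dX x 0.
    move: Bd; rewrite /in_Bd /dmap gt_max => /andP[Hs _].
    have ub : forall x : X, x != 0 -> ((dY (F x) 0 / dX x 0)%R%:E <= ereal_sup
        [set ((dY (F x) (0:Y)) / dX x 0)%R%:E | x in [set x : X | x != 0%R]])%E.
      by move=> x x0; apply: ereal_sup_ubound; exists x.
    move: ub Hs; case: (ereal_sup _) => [r| |] ub Hs //.
    + exists (`|r| + 1); first by rewrite ltr_pwDr // normr_ge0.
      move=> x x0; have := ub x x0; rewrite lee_fin ler_pdivrMr ?dXpos //.
      move=> h; apply: (le_trans h); rewrite ler_pM2r ?dXpos //.
      by apply: (le_trans (ler_norm r)); rewrite lerDl.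
    + exists 1 => // x x0; have := ub x x0; by rewrite leeNy_eq.
  move=> x e e0.
  have e'0 : 0 < e / C by rewrite divr_gt0.
  have [r2 r20 Hadd] := addc x (- x) (e / C) e'0.
  have [r1 r10 Hsc] := scalc (-1) x r2 r20.
  exists r1 => // y dxy.
  have h1 : dX (- x) (- y) < r2.
    by have := Hsc (-1) y; rewrite subrr abs0 !scaleN1r; apply.
  have h2 : dX 0 (x - y) < e / C.
    by have := Hadd x (- y); rewrite subrr; apply => //; rewrite dXxx.
  have -> : dY (F x) (F y) = dY (F (x - y)) 0.
    by rewrite -(tiY (F x) (F y) (- F y)) subrr linearB.
  have [->|xy0] := eqVneq (x - y) 0; first by rewrite linear0 dYxx.
  apply: (le_lt_trans (HC _ xy0)).
  by rewrite -ltr_pdivlMl // mulrC dXC.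
-
  move=> Fc tiX M Mpos [B MB] Msc nY [nY0 nYE nYZ nYD] dYn.
  have B0 : 0 < B by apply: (lt_le_trans (Mpos 0)).
  have [r r0 Hr] := Fc 0 1 ltr01.
  have F0 : F 0 = 0 := linear0 F.
  rewrite /in_Bd /dmap gt_max; apply/andP; split; last first.
    by rewrite F0 dYxx ltry.
  apply: (@le_lt_trans _ _ ((2 * B / r)%:E)); last exact: ltry.
  apply: ub_ereal_sup => _ [x /= x0 <-]; rewrite lee_fin.
  have dx0 := dXpos x x0.
  set t := r / (2 * B * dX x 0).
  have t0 : 0 < t by rewrite /t divr_gt0 // !mulr_gt0.
  have [a at_] := absreal _ t0.
  have Bt : B * t * dX x 0 = r / 2.
    by rewrite /t; field; rewrite ?gt_eqF // ?mulr_gt0.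
  have H1 : dX 0 (a *: x) < r.
    rewrite dXC; apply: (le_lt_trans (Msc a x)); rewrite at_.
    apply: (@le_lt_trans _ _ (B * t * dX x 0)).
      by rewrite ler_pM2r // ler_pM2r.
    by rewrite Bt ltr_pdivrMr // ltr_pMr // ltr1n.
  have := Hr _ H1; rewrite F0 dYC dYn subr0 linearZ nYZ at_ => H2.
  rewrite dYn subr0 ler_pdivrMr //.
  have -> : 2 * B / r * dX x 0 = t^-1.
    by rewrite /t; field; rewrite ?gt_eqF // ?mulr_gt0.
  by apply/ltW; rewrite -(ltr_pM2l t0) mulfV ?gt_eqF.
-
  move=> tiX [x0 Hx0] x e e0.
  have [r r0 Hr] := Hx0 e e0.
  exists r => // y dxy.
  have e1 : dX x0 (y + (x0 - x)) = dX x y.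
    by rewrite -(tiX x y (x0 - x)) [x + _]addrC subrK.
  have e2 : dY (F x0) (F (y + (x0 - x))) = dY (F x) (F y).
    by rewrite -(tiY (F x) (F y) (F x0 - F x)) [F x + _]addrC subrK linearD linearB.
  by rewrite -e2; apply: Hr; rewrite e1.
Qed.
End Gen.

Theorem theorem9 (R : realType) :
  theorem9_for (K := R) (fun a : R => `|a|) /\
  theorem9_for (K := Rcomplex R) (fun z : Rcomplex R => `|z| : R).
Proof.
split; apply: gen9.
- by rewrite normr0.
- by move=> t t0; exists t; rewrite gtr0_norm.
- by rewrite normr0.
- move=> t t0; exists (Complex t 0).
  by rewrite /Num.norm /= expr0n /= addr0 sqrtr_sqr gtr0_norm.
Qed.
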